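(* Let $q$ be a prime power. Then $\mathbb{F}_q$ admits a complete mapping that permutes all elements of $\mathbb{F}_q$ in a single cycle (i.e., of cycle type $x_q$) if and only if $q$ is odd.
   Context: A complete mapping of the field $\mathbb{F}_q$ is a permutation $f$ of $\mathbb{F}_q$ such that $x\mapsto f(x)+x$ is also a permutation of $\mathbb{F}_q$. *)

(* Defs.v *)
From mathcomp Require Import all_boot all_order all_algebra all_fingroup all_field.
Set Implicit Arguments. Unset Strict Implicit. Unset Printing Implicit Defensive.
Import GRing.Theory.
Local Open Scope ring_scope.

(* A complete mapping of a finite field F: a permutation f of F such that
   x |-> f x + x is also a permutation of F (i.e. injective, F being finite). *)
Definition complete_mapping (F : finFieldType) (f : {perm F}) : Prop :=
  injective (fun x : F => f x + x).

Definition single_cycle (F : finFieldType) (f : {perm F}) : Prop :=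
  #|porbits f| = 1%N.

(* Main.v *)
Require Import Defs.
From mathcomp Require Import all_boot all_order all_algebra all_fingroup all_field.
From mathcomp Require Import all_solvable zify ring.
Set Implicit Arguments. Unset Strict Implicit. Unset Printing Implicit Defensive.
Import GRing.Theory.

Lemma oddF (F : finFieldType) p : p \in [pchar F]%R -> odd #|F| = odd p.
Proof.
move=> pc; have pp := pcharf_prime pc.
have ab := fin_ring_pchar_abelem pc.
have pn : p.-nat #|F| by have := abelem_pgroup ab; rewrite /pgroup cardsT.
have F1 : 1 < #|F| by exact: finNzRing_gt1.
have pd : pdiv #|F| = p.
  have h : pdiv #|F| \in \pi(#|F|) by rewrite pi_pdiv.
  by have := pnatPpi pn h; rewrite inE => /eqP.
case: (even_prime pp) => [p2|op]; last first.
  rewrite op; apply/negP => /negP ev.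
  have d2 : 2 %| #|F| by rewrite dvdn2.
  have : 2 \in \pi(#|F|) by rewrite mem_primes d2 andbT (ltn_trans _ F1).
  move/(pnatPpi pn); rewrite inE => /eqP p2; by rewrite -p2 in op.
rewrite p2 /=; apply/negP => oF.
have : p %| #|F| by rewrite -pd pdiv_dvd.
by rewrite p2 dvdn2 oF.
Qed.
Lemma arith p j k : odd p -> 2 < p -> (j < p.-1) -> ~~ (k < p.-1) -> k < p -> (2*j+1 = k %[mod p]) -> False.
Proof.
move=> po p2 hj hk kp.
have -> : k = p.-1 by lia.
rewrite (modn_small (m:=p.-1)); last by lia.
have [r pr] : exists r, p = 2 * r + 1 by exists p./2; rewrite -{1}(odd_double_half p) po; lia.
case: (ltnP (2*j+1) p) => h.
  by rewrite modn_small //; lia.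
have -> : 2*j+1 = (2*j+1 - p) + p by lia.
rewrite modnDr modn_small; lia.
Qed.

Local Open Scope ring_scope.

Section Step.
Variables (F : finFieldType) (p : nat).
Hypothesis pc : p \in [pchar F].
Hypothesis podd : odd p.

Definition zcl (S : {set F}) := 0 \in S /\ {in S &, forall u v, u - v \in S}.

Lemma zclN S u : zcl S -> u \in S -> - u \in S.
Proof. by case=> z0 zB uS; rewrite -sub0r zB. Qed.
Lemma zclD S u v : zcl S -> u \in S -> v \in S -> u + v \in S.
Proof. move=> zS uS vS; rewrite -[v]opprK; have [_ zB] := zS; by apply: zB => //; exact: zclN. Qed.
Lemma zclMn S u n : zcl S -> u \in S -> u *+ n \in S.
Proof. move=> zS uS; elim: n => [|n IH]; first by case: zS. by rewrite mulrSr zclD. Qed.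

Lemma mulrn_modp (e : F) n : e *+ n = e *+ (n %% p).
Proof.
rewrite {1}(divn_eq n p) mulrnDr mulnC mulrnA (mulrn_pchar pc) mul0rn add0r //.
Qed.

Lemma pprime : prime p. Proof. exact: pcharf_prime pc. Qed.
Lemma p_gt2 : (2 < p)%N.
Proof. have := prime_gt1 pprime; move: podd; case: p => [|[|[|]]] //. Qed.

Variables (S : {set F}) (e : F).
Hypotheses (zS : zcl S) (eS : e \notin S).

Lemma uniqS a b : e *+ a - e *+ b \in S -> a = b %[mod p].
Proof.
wlog ba : a b / (b <= a)%N.
  move=> W; case: (leqP b a) => [/W//|/ltnW ab H]; symmetry; apply: W => //.
  by rewrite -opprB zclN.
rewrite -mulrnBr // mulrn_modp => H; apply/eqP; rewrite eqn_mod_dvd //.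
set d := ((a - b) %% p)%N in H.
have dp : (d < p)%N by rewrite ltn_pmod // prime_gt0 // pprime.
case d0 : (d == 0)%N; first by rewrite /dvdn; apply/eqP; apply/eqP: d0.
have [c _ hc] := Bezoutl d (prime_gt0 pprime).
have g1 : gcdn p d = 1%N.
  apply/eqP; rewrite -/(coprime p d) prime_coprime ?pprime //.
  apply/negP => /dvdn_leq; move: d0 dp; lia.
rewrite g1 in hc.
have : e *+ (1 + c * d) = 0 by rewrite mulrn_modp; move: hc; rewrite /dvdn => /eqP ->.
rewrite mulrnDr mulr1n mulnC mulrnA => /eqP; rewrite addr_eq0 => /eqP ee.
by move: eS; rewrite ee zclN // zclMn.
Qed.

Definition S' := [set x | [exists j : 'I_p, x - e *+ j \in S]].

Lemma memS' x j : (j < p)%N -> x - e *+ j \in S -> x \in S'.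
Proof. by move=> jp H; rewrite inE; apply/existsP; exists (Ordinal jp). Qed.

Definition idx (x : F) : nat :=
  if [pick j : 'I_p | x - e *+ j \in S] is Some j then nat_of_ord j else 0%N.

Lemma idxP x : x \in S' -> (idx x < p)%N /\ x - e *+ idx x \in S.
Proof.
rewrite inE /idx => /existsP [j0 Hj0]; case: pickP => [j Hj|/(_ j0)]; last by rewrite Hj0.
by split.
Qed.

Lemma idx_eq x j : (j < p)%N -> x - e *+ j \in S -> idx x = j.
Proof.
move=> jp H; have [ip Hi] := idxP (memS' jp H).
have : e *+ j - e *+ idx x \in S.
  have -> : e *+ j - e *+ idx x = (x - e *+ idx x) - (x - e *+ j) by ring.
  by case: zS => _; apply.
by move/uniqS; rewrite !modn_small.
Qed.


Lemma two_neq0 : (2%:R : F) != 0.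
Proof.
rewrite -(dvdn_pcharf pc); apply/negP => /dvdn_leq H.
have := p_gt2; have := H isT; lia.
Qed.

Lemma mul2I (x y : F) : x *+ 2 = y *+ 2 -> x = y.
Proof.
move=> H; apply/eqP; rewrite -subr_eq0.
have : 2%:R * (x - y) = 0 by rewrite mulr_natl mulrnBl H subrr.
by move/eqP; rewrite mulf_eq0 (negbTE two_neq0) /=.
Qed.

Variable f : F -> F.
Hypotheses (fS : {in S, forall x, f x \in S})
  (fI : {in S &, injective (fun x => f x + x)})
  (fC : {in S &, forall x y, exists k, y = iter k f x}).

Definition f' x := if (idx x < p.-1)%N then x + e else f (x - e *+ idx x).

Lemma S'S x : x \in S -> x \in S'.
Proof. by move=> xS; apply: (memS' (j:=0)); rewrite ?prime_gt0 ?pprime // subr0. Qed.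

Lemma f'S x : x \in S' -> f' x \in S'.
Proof.
move=> /idxP [ip Hi]; rewrite /f'; case: ifP => h.
  apply: (memS' (j := (idx x).+1)); first by move: h; lia.
  by have -> : x + e - e *+ (idx x).+1 = x - e *+ idx x by rewrite mulrSr; ring.
by apply: S'S; apply: fS.
Qed.

Lemma f'I : {in S' &, injective (fun x => f' x + x)}.
Proof.
move=> x y /idxP [ip Hi] /idxP [iq Hq]; rewrite /f' /=.
move: (idx x) (idx y) ip Hi iq Hq => j k ip Hi iq Hq.
move: Hi; move Es: (x - e *+ j) => s Hi.
move: Hq; move Et: (y - e *+ k) => t Hq.
have Ex : x = s + e *+ j by rewrite -Es subrK.
have Ey : y = t + e *+ k by rewrite -Et subrK.
have [_ zB] := zS.
case: ifP => hj; case: ifP => hk.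
- move=> H; apply: mul2I; rewrite !mulr2n.
  have -> : x + x = (x + e + x) - e by ring.
  rewrite H; ring.
- move=> H; exfalso.
  have h1 : (x + e + x) - e *+ (2 * j + 1) \in S.
    have -> : x + e + x - e *+ (2 * j + 1) = s *+ 2.
      by rewrite Ex mulrnDr mulr1n mulnC mulrnA; ring.
    exact: zclMn.
  have h2 : (x + e + x) - e *+ k \in S.
    rewrite H; have -> : f t + y - e *+ k = f t + t by rewrite Ey; ring.
    by rewrite zclD // fS.
  have : e *+ (2 * j + 1) - e *+ k \in S.
    have -> : e *+ (2 * j + 1) - e *+ k = (x + e + x - e *+ k) - (x + e + x - e *+ (2 * j + 1)) by ring.
    exact: zB.
  by move/uniqS; apply: (arith podd p_gt2 _ (negbT hk) iq); rewrite hj.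
- move=> H; exfalso.
  have h1 : (y + e + y) - e *+ (2 * k + 1) \in S.
    have -> : y + e + y - e *+ (2 * k + 1) = t *+ 2.
      by rewrite Ey mulrnDr mulr1n mulnC mulrnA; ring.
    exact: zclMn.
  have h2 : (y + e + y) - e *+ j \in S.
    rewrite -H; have -> : f s + x - e *+ j = f s + s by rewrite Ex; ring.
    by rewrite zclD // fS.
  have : e *+ (2 * k + 1) - e *+ j \in S.
    have -> : e *+ (2 * k + 1) - e *+ j = (y + e + y - e *+ j) - (y + e + y - e *+ (2 * k + 1)) by ring.
    exact: zB.
  by move/uniqS; apply: (arith podd p_gt2 _ (negbT hj) ip); rewrite hk.
- have jk : j = k by move: hj hk ip iq; lia.
  move=> H; have E : f s + s = f t + t.
    have -> : f s + s = (f s + x) - e *+ j by rewrite Ex; ring.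
    by rewrite H Ey -jk; ring.
  by rewrite Ex Ey -jk (fI Hi Hq E).
Qed.

Lemma iter_small s i : s \in S -> (i < p)%N -> iter i f' s = s + e *+ i.
Proof.
move=> sS; elim: i => [|i IH] ip; first by rewrite addr0.
rewrite iterS IH; last by move: ip; lia.
rewrite /f' (@idx_eq _ i); last by rewrite addrK.
  by rewrite ifT ?mulrSr ?addrA //; move: ip; lia.
by move: ip; lia.
Qed.

Lemma iter_p s : s \in S -> iter p f' s = f s.
Proof.
move=> sS; have p1 : p = (p.-1).+1 by have := p_gt2; lia.
rewrite p1 iterS iter_small //; last by rewrite -p1; have := p_gt2; lia.
rewrite /f' (@idx_eq _ p.-1); last by rewrite addrK.
  by rewrite ltnn addrK.
by rewrite -p1; have := p_gt2; lia.
Qed.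

Lemma iter_fS s m : s \in S -> iter m f s \in S.
Proof. by move=> sS; elim: m => //= m IH; rewrite fS. Qed.

Lemma iter_pm s m : s \in S -> iter (m * p) f' s = iter m f s.
Proof.
move=> sS; elim: m => // m IH.
by rewrite mulSn iterD IH iter_p // iter_fS.
Qed.

Lemma f'C : {in S' &, forall x y, exists k, y = iter k f' x}.
Proof.
move=> x y /idxP [ip Hi] /idxP [iq Hq].
move: (idx x) (idx y) ip Hi iq Hq => j k ip Hi iq Hq.
move: Hi; move Es: (x - e *+ j) => s Hi.
move: Hq; move Et: (y - e *+ k) => t Hq.
have Ex : x = s + e *+ j by rewrite -Es subrK.
have Ey : y = t + e *+ k by rewrite -Et subrK.
have [m Hm] := fC (fS Hi) Hq.
exists (k + m * p + (p - j))%N.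
have h1 : iter (p - j) f' x = f s.
  by rewrite Ex -iter_small // -iterD subnK ?iter_p //; apply: ltnW.
by rewrite iterD h1 iterD iter_pm ?fS // -Hm Ey iter_small.
Qed.

End Step.

Definition good (F : finFieldType) (S : {set F}) :=
  exists f : F -> F, [/\ {in S, forall x, f x \in S},
    {in S &, injective (fun x => f x + x)} &
    {in S &, forall x y, exists k, y = iter k f x}].

Lemma grow (F : finFieldType) p : p \in [pchar F] -> odd p ->
  forall n (S : {set F}), zcl S -> good S -> (#|~: S| < n)%N -> good [set: F].
Proof.
move=> pc po; elim=> [//|n IH] S zS [f [fS fI fC]] hn.
have [Sfull|[e eS]] : S = setT \/ exists e, e \notin S.
  case: (boolP [exists e, e \notin S]) => [/existsP [e he]|/existsPn H].
    by right; exists e.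
  by left; apply/setP => x; rewrite inE; move: (H x); rewrite negbK.
  by rewrite -Sfull; exists f.
have zS' : zcl (S' p S e).
  split; first by apply: (S'S pc); case: zS.
  move=> u v /idxP [ju Hu] /idxP [jv Hv].
  have pp := pcharf_prime pc.
  apply: (memS' (j := ((idx p S e u + (p - idx p S e v)) %% p)%N)).
    by rewrite ltn_pmod // prime_gt0.
  rewrite -(mulrn_modp pc) mulrnDr mulrnBr ?(ltnW jv) // (mulrn_pchar pc) sub0r.
  have -> : u - v - (e *+ idx p S e u - e *+ idx p S e v) =
     (u - e *+ idx p S e u) - (v - e *+ idx p S e v) by ring.
  by case: zS => _; apply.
apply: (IH (S' p S e)) => //.
  exists (f' p S e f); split.
  - exact: f'S.
  - exact: f'I.
  - exact: f'C.
rewrite ltnS in hn.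
suff hlt : (#|~: S' p S e| < #|~: S|)%N by exact: (leq_trans hlt hn).
apply: proper_card; rewrite properC; apply/properP; split.
  by apply/subsetP => x; apply: (S'S pc).
exists e => //; apply: (memS' (j := 1%N)); first by have := p_gt2 pc po; lia.
by rewrite mulr1n subrr; case: zS.
Qed.

Theorem corollary1p5 (F : finFieldType) :
  (exists f : {perm F}, complete_mapping f /\ single_cycle f) <-> odd #|F|.
Proof.
have [p pp pc] := finPcharP F.
split.
- case=> f [cf sc]; apply/negP => ev.
  have p2 : p = 2%N.
    by case: (even_prime pp) => // op; move: ev; rewrite (oddF pc) op.
  have two0 : (2%:R : F) = 0 by rewrite -p2; exact: pcharf0.
  have xx : forall x : F, x + x = 0 by move=> x; rewrite -mulr2n -mulr_natl two0 mul0r.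
  have := inj_card_onto cf (leqnn _) (0 : F).
  case/codomP => x /esym /eqP; rewrite addr_eq0 => /eqP fx.
  have fxx : f x = x by rewrite fx -[RHS]subr0 -(xx x); ring.
  have orb : forall y, y \in porbit f x -> y = x.
    move=> y /porbitP [i ->]; rewrite permX; elim: i => //= i ->; exact: fxx.
  move: sc => /eqP /cards1P [A hA].
  have h1 : porbit f x \in porbits f by apply: imset_f.
  have h2 : porbit f (x + 1) \in porbits f by apply: imset_f.
  move: h1 h2; rewrite hA !inE => /eqP h1 /eqP h2.
  have := porbit_id f (x + 1); rewrite h2 -h1 => /orb /eqP.
  by rewrite -subr_eq0 addrC addKr oner_eq0.
- move=> oF; have po : odd p by rewrite -(oddF pc).
  have z0 : zcl [set (0 : F)].
    split; first by rewrite inE.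
    by move=> u v; rewrite !inE => /eqP -> /eqP ->; rewrite subr0.
  have g0 : good [set (0 : F)].
    exists id; split.
    - by [].
    - by move=> u v; rewrite !inE => /eqP -> /eqP ->.
    - by move=> u v; rewrite !inE => /eqP -> /eqP ->; exists 0%N.
  have [f [_ fI fC]] := grow pc po z0 g0 (ltnSn #|~: [set (0 : F)]|).
  pose g y := odflt y [pick x | f x == y].
  have gK : cancel g f.
    move=> y; rewrite /g; case: pickP => [x /eqP //|H].
    have [k Hk] := fC (f 0) y (in_setT _) (in_setT _).
    by move: (H (iter k f 0)); rewrite -iterS iterSr -Hk eqxx.
  have [g' gg' g'g] := injF_bij (can_inj gK).
  have fE : f =1 g' by move=> z; rewrite -{1}(g'g z) gK.
  have finj : injective f by move=> a b; rewrite !fE; apply: (can_inj g'g).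
  exists (perm finj); split.
  + by move=> a b /=; rewrite !permE; apply: fI; rewrite inE.
  + apply/eqP/cards1P; exists [set: F]; apply/setP => A; rewrite inE.
    have pT : forall x, porbit (perm finj) x = [set: F].
      move=> x; apply/setP => y; rewrite inE; apply/porbitP.
      have [k Hk] := fC x y (in_setT _) (in_setT _).
      by exists k; rewrite permX Hk; apply: eq_iter => z; rewrite permE.
    apply/imsetP/eqP => [[x _ ->]|->]; first exact: pT.
    by exists 0 => //; rewrite pT.
Qed.
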